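(* Let $s \ge 2$ and $q \ge 1$ be integers with $2(q-s)^2<s-1$. Then $R(s,q) \le s+2(q-s)+2(q-s)^2$.
   Context: Let $Z_s$ be the ring of integers modulo $s$. A family $\mathcal{F} \subseteq Z_s^q$ is covering if for every ordered pair of distinct vectors $u,v \in \mathcal{F}$ and every $a \in Z_s$ there is a coordinate $i$ with $u_i - v_i = a$. $R(s,q)$ denotes the maximum possible cardinality of a covering family in $Z_s^q$. *)

(* Defs.v *)
From mathcomp Require Import all_boot all_order all_algebra.
Set Implicit Arguments. Unset Strict Implicit. Unset Printing Implicit Defensive.
Import GRing.Theory.
Local Open Scope ring_scope.

(* Vectors of Z_s^q: finite functions 'I_q -> 'Z_s  (meaningful for s >= 2). *)
Definition coveringb (s q : nat) (F : {set {ffun 'I_q -> 'Z_s}}) : bool :=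
  [forall u in F, forall v in F, (u != v) ==>
     [forall a : 'Z_s, [exists i : 'I_q, u i - v i == a]]].

Definition R (s q : nat) : nat :=
  \max_(F : {set {ffun 'I_q -> 'Z_s}} | coveringb F) #|F|.

(* Main.v *)
Require Import Defs.
From mathcomp Require Import all_boot all_order all_algebra zify ring.

Lemma sum_eq1 (T : finType) (y : T) : \sum_(x : T) ((y == x) : nat) = 1%N.
Proof.
rewrite (bigD1 y) //= eqxx big1 // => x /negbTE; rewrite eq_sym => -> //.
Qed.

Lemma sum_sq_count (I T : finType) (P : pred I) (f : I -> T) :
  \sum_(x : T) (\sum_(u | P u) ((f u == x) : nat)) ^ 2
  = \sum_(u | P u) \sum_(v | P v) ((f u == f v) : nat).
Proof.
under eq_bigr => x _ do rewrite expnS expn1 big_distrl /=.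
under eq_bigr => x _ do under eq_bigr => u _ do rewrite big_distrr /=.
rewrite exchange_big /=; apply: eq_bigr => u _.
rewrite exchange_big /=; apply: eq_bigr => v _.
rewrite (bigD1 (f u)) //= eqxx mul1n big1 ?addn0 1?eq_sym // => x /negbTE.
by rewrite eq_sym => ->.
Qed.

Lemma sumsq_le_sq (T : finType) (e : T -> nat) :
  \sum_x (e x) ^ 2 <= (\sum_x e x) ^ 2.
Proof.
rewrite expnS expn1 big_distrl /=; apply: leq_sum => x _.
rewrite expnS expn1 big_distrr /= (bigD1 x) //=; exact: leq_addr.
Qed.

Lemma sq_bound (T : finType) (t : T -> nat) : (forall x, 0 < t x)%N ->
  (\sum_x (t x) ^ 2 <= (\sum_x t x - #|T|) ^ 2 + 2 * (\sum_x t x - #|T|) + #|T|)%N.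
Proof.
move=> tpos.
have Ht : forall x, t x = (t x - 1) + 1 by move=> x; have := tpos x; lia.
have -> : (\sum_x t x = \sum_x (t x - 1) + #|T|)%N.
  rewrite -sum1_card -big_split /=; apply: eq_bigr => x _; exact: Ht.
rewrite addnK.
have -> : (\sum_x (t x)^2 = \sum_x (t x - 1)^2 + 2 * \sum_x (t x - 1) + #|T|)%N.
  rewrite -sum1_card big_distrr /= -!big_split /=; apply: eq_bigr => x _.
  rewrite {1}(Ht x) sqrnD; lia.
rewrite leq_add2r leq_add2r; exact: sumsq_le_sq.
Qed.

Lemma sumc (T : finType) (c : nat) : (\sum_(y : T) c = #|T| * c)%N.
Proof. by rewrite big_const iter_addn_0 mulnC cardE. Qed.

Lemma cauchy (T : finType) (M : T -> nat) :
  ((\sum_x M x) ^ 2 <= #|T| * \sum_x (M x) ^ 2)%N.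
Proof.
rewrite -(leq_pmul2l (isT : 0 < 2)%N).
have -> : (2 * (#|T| * \sum_x (M x) ^ 2) = \sum_x \sum_y ((M x)^2 + (M y)^2))%N.
  apply/esym; under eq_bigr => x _ do rewrite big_split /= sumc.
  rewrite big_split /= sumc -big_distrr /=; lia.
have -> : (2 * (\sum_x M x) ^ 2 = \sum_x \sum_y 2 * (M x * M y))%N.
  rewrite expnS expn1 big_distrl /= big_distrr /=; apply: eq_bigr => x _.
  rewrite big_distrr /= big_distrr /=; apply: eq_bigr => y _; lia.
apply: leq_sum => x _; apply: leq_sum => y _; exact: nat_Cauchy.
Qed.

Local Open Scope ring_scope.
Lemma fin (m s d : int) : 0 <= m -> 0 <= d -> 2 <= s -> 2 * d * d < s - 1 ->
  m * (s + d - d * d) <= s * (s + 2 * d) -> m <= s + 2 * d + 2 * d * d.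
Proof.
move=> m0 d0 s2 hd H.
have K : 0 < s + d - d * d by nia.
have E : s * (s + 2 * d) <= (s + 2 * d + 2 * d * d) * (s + d - d * d).
  have : 0 <= d * (s + s * d + 2 * d - 2 * d * d * d).
    apply: Num.Theory.mulr_ge0 => //. nia.
  nia.
nia.
Qed.

Lemma arith (m s d P : nat) : (2 <= s)%N -> (0 < m)%N -> (2 * d * d < s - 1)%N ->
  ((s + d) * ((s + d) * (m * m) + (s - 1) * (m * m)) <= s * P)%N ->
  (P + m * (d * d + 2 * d + s) <= m * (m * (d * d + 2 * d + s)) + m * ((s + d) * (s + d)))%N ->
  (m <= s + 2 * d + 2 * d * d)%N.
Proof.
move=> s2 m0 hd H1 H2.
have H3 : ((s + d) * ((s + d) * (m * m) + (s - 1) * (m * m)) + s * (m * (d * d + 2 * d + s))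
   <= s * (m * (m * (d * d + 2 * d + s)) + m * ((s + d) * (s + d))))%N.
  apply: (@leq_trans (s * P + s * (m * (d * d + 2 * d + s)))).
    by rewrite leq_add2r.
  by rewrite -mulnDr leq_mul2l H2 orbT.
have H4 : ((s + d) * ((s + d) * m + (s - 1) * m) + s * (d * d + 2 * d + s)
   <= s * (m * (d * d + 2 * d + s) + ((s + d) * (s + d))))%N.
  rewrite -(leq_pmul2l m0). 
  move: H3; set X := (_ + _ <= _)%N; set Y := (_ <= _)%N.
  have -> : X = Y; last done.
  rewrite /X /Y; congr (_ <= _)%N; ring.
have H5 : (m%:Z * (s%:Z + d%:Z - d%:Z * d%:Z) <= s%:Z * (s%:Z + 2 * d%:Z))%R.
  have s1 : (0 < s%:Z - 1)%R by lia.
  rewrite -(Num.Theory.ler_pM2l s1).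
  have e : (s - 1)%:Z = (s%:Z - 1)%R by lia.
  move: H4; rewrite -lez_nat !(PoszD, PoszM) e => H4.
  rewrite -Num.Theory.subr_ge0.
  have -> : ((s%:Z - 1) * (s%:Z * (s%:Z + 2 * d%:Z)) -
    (s%:Z - 1) * (m%:Z * (s%:Z + d%:Z - d%:Z * d%:Z)) =
    (s%:Z * (m%:Z * (d%:Z * d%:Z + 2 * d%:Z + s%:Z) + (s%:Z + d%:Z) * (s%:Z + d%:Z))) -
    ((s%:Z + d%:Z) * ((s%:Z + d%:Z) * m%:Z + (s%:Z - 1) * m%:Z) + s%:Z * (d%:Z * d%:Z + 2 * d%:Z + s%:Z)))%R.
    ring.
  by rewrite Num.Theory.subr_ge0.
have := fin (m%:Z) (s%:Z) (d%:Z).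
have hd' : (2 * d%:Z * d%:Z < s%:Z - 1)%R by lia.
move=> /(_ _ _ _ hd' H5) H6.
rewrite -lez_nat !(PoszD, PoszM); apply: H6; lia.
Qed.

Import GRing.Theory.

Definition Nf (s q : nat) (u v : {ffun 'I_q -> 'Z_s}) : nat :=
  (\sum_(i : 'I_q) \sum_(j : 'I_q) (((u i - v i)%R == (u j - v j)%R) : nat))%N.

Arguments Nf {s q}.

Lemma covP (s q : nat) (F : {set {ffun 'I_q -> 'Z_s}}) u v (a : 'Z_s) :
  coveringb F -> u \in F -> v \in F -> u != v -> exists i, u i - v i = a.
Proof.
move=> /forall_inP /(_ u) cov uF vF uv.
move: (cov uF) => /forall_inP /(_ v vF) /implyP /(_ uv) /forallP /(_ a) /existsP [i /eqP Hi].
by exists i.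
Qed.

Lemma N_le (s q : nat) (F : {set {ffun 'I_q -> 'Z_s}}) u v : (1 < s)%N ->
  coveringb F -> u \in F -> v \in F -> u != v ->
  (Nf u v <= (q - s) ^ 2 + 2 * (q - s) + s)%N.
Proof.
move=> s1 cov uF vF uv.
have := @sum_sq_count _ _ xpredT (fun i => u i - v i) => /= E.
rewrite /Nf -E.
set t := fun a : 'Z_s => (\sum_(i : 'I_q) (((u i - v i)%R == a) : nat))%N.
have tpos : forall a, (0 < t a)%N.
  move=> a; have [i Hi] := @covP _ _ _ _ _ a cov uF vF uv.
  by rewrite /t (bigD1 i) //= Hi eqxx.
have tsum : (\sum_a t a = q)%N.
  rewrite /t exchange_big /=.
  under eq_bigr => i _ do rewrite sum_eq1.
  by rewrite sum1_card card_ord.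
have := @sq_bound _ t tpos; have -> : #|{: 'Z_s}| = s by rewrite card_ord Zp_cast.
by rewrite tsum.
Qed.

Lemma eq_sub_swap (R : comNzRingType) (a b c d : R) : (a - b == c - d) = (a - c == b - d).
Proof.
rewrite -subr_eq0 -[RHS]subr_eq0.
have -> : a - b - (c - d) = a - c - (b - d) by ring.
by [].
Qed.

Lemma swap4 (A I : finType) (F : {set A}) (f : A -> A -> I -> I -> nat) :
  (\sum_(u in F) \sum_(v in F) \sum_(i : I) \sum_(j : I) f u v i j
  = \sum_(i : I) \sum_(j : I) \sum_(u in F) \sum_(v in F) f u v i j)%N.
Proof.
under eq_bigr => u _ do rewrite exchange_big /=.
rewrite exchange_big /=; apply: eq_bigr => i _.
under eq_bigr => u _ do rewrite exchange_big /=.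
by rewrite exchange_big.
Qed.

Lemma T_lower (s q : nat) (F : {set {ffun 'I_q -> 'Z_s}}) (i j : 'I_q) : (1 < s)%N ->
  (#|F| ^ 2 + (i == j) * ((s - 1) * #|F| ^ 2) <=
   s * \sum_(u in F) \sum_(v in F) (((u i - u j)%R == (v i - v j)%R) : nat))%N.
Proof.
move=> s1; case: eqVneq => [<-|ij] /=.
  under eq_bigr => u _ do under eq_bigr => v _ do rewrite !subrr eqxx /=.
  rewrite !sum_nat_const muln1 mulnn mul1n -mulSn subn1 prednK //; exact: ltnW.
have := @sum_sq_count _ _ (fun u => u \in F) (fun u => u i - u j) => /= E.
move: E. set LL := (\sum_(u in F) _)%N. move=> E. rewrite -E mul0n addn0.
have := @cauchy _ (fun x => \sum_(u in F) (((u i - u j)%R == x) : nat))%N.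
have -> : #|{: 'Z_s}| = s by rewrite card_ord Zp_cast.
have -> // : (\sum_x \sum_(u in F) (((u i - u j)%R == x) : nat) = #|F|)%N.
rewrite exchange_big /=.
under eq_bigr => u _ do rewrite sum_eq1.
by rewrite sum1_card.
Qed.

Lemma sum_in_eq1 (T : finType) (F : {set T}) u : u \in F ->
  (\sum_(v in F) ((u == v) : nat) = 1)%N.
Proof.
move=> uF; rewrite (bigD1 u) //= eqxx big1 // => v /andP [_ /negbTE].
by rewrite eq_sym => ->.
Qed.

Lemma sum_in_eqc (T : finType) (F : {set T}) u c : u \in F ->
  (\sum_(v in F) ((u == v) : nat) * c = c)%N.
Proof.
move=> uF; rewrite (bigD1 u) //= eqxx mul1n big1 ?addn0 // => v /andP [_ /negbTE].
by rewrite eq_sym => ->.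
Qed.

Lemma Nf_uu (s q : nat) (u : {ffun 'I_q -> 'Z_s}) : Nf u u = (q * q)%N.
Proof.
rewrite /Nf; under eq_bigr => i _ do under eq_bigr => j _ do rewrite !subrr eqxx /=.
by rewrite sumc sumc card_ord muln1.
Qed.

Lemma P_lower (s q : nat) (F : {set {ffun 'I_q -> 'Z_s}}) : (1 < s)%N ->
  (q * (q * (#|F| * #|F|) + (s - 1) * (#|F| * #|F|)) <=
   s * \sum_(u in F) \sum_(v in F) Nf u v)%N.
Proof.
move=> s1; rewrite /Nf swap4 big_distrr /=.
apply: (@leq_trans (\sum_(i : 'I_q) \sum_(j : 'I_q)
    (#|F| ^ 2 + (i == j) * ((s - 1) * #|F| ^ 2)))%N).
  apply: eq_leq.
  rewrite (eq_bigr (fun _ => q * (#|F| * #|F|) + (s - 1) * (#|F| * #|F|))%N) ?sumc ?card_ord // => i _.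
  rewrite big_split /= sumc -big_distrl /= sum_eq1 mul1n card_ord mulnn //.
apply: leq_sum => i _; rewrite big_distrr /=; apply: leq_sum => j _.
under eq_bigr => u _ do under eq_bigr => v _ do rewrite eq_sub_swap.
exact: T_lower.
Qed.

Lemma P_upper (s q : nat) (F : {set {ffun 'I_q -> 'Z_s}}) (A : nat) :
  (forall u v, u \in F -> v \in F -> u != v -> (Nf u v <= A)%N) ->
  (\sum_(u in F) \sum_(v in F) Nf u v + #|F| * A <=
   #|F| * (#|F| * A) + #|F| * (q * q))%N.
Proof.
move=> HA.
have H : forall u, u \in F -> (\sum_(v in F) Nf u v + A <= #|F| * A + q * q)%N.
  move=> u uF.
  have := @leq_sum _ (index_enum _) (fun v => v \in F)
    (fun v => Nf u v + (u == v) * A)%N (fun v => A + (u == v) * (q * q))%N.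
  rewrite !big_split /= !sum_in_eqc // sum_nat_const.
  apply=> v vF; case: eqVneq => [<-|uv]; first by rewrite Nf_uu /=; lia.
  by rewrite !mul0n !addn0; apply: HA.
have := @leq_sum _ (index_enum _) (fun u => u \in F)
    (fun u => \sum_(v in F) Nf u v + A)%N (fun u => #|F| * A + q * q)%N H.
by rewrite big_split /= !sum_nat_const mulnDr.
Qed.

Lemma Rbound_big (s d : nat) : (2 <= s)%N -> (2 * d * d < s - 1)%N ->
  (R s (s + d) <= s + 2 * d + 2 * d * d)%N.
Proof.
move=> s2 hd; rewrite /R; apply/bigmax_leqP => F cov.
have [m0|mpos] := posnP #|F|; first by rewrite m0.
have s1 : (1 < s)%N by [].
apply: (@arith _ _ _ _ s2 mpos hd (@P_lower _ _ F s1)).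
have := @P_upper s (s + d) F ((s + d - s) ^ 2 + 2 * (s + d - s) + s)%N.
rewrite addKn expnS expn1.
apply=> u v uF vF uv.
have := @N_le _ _ _ _ _ s1 cov uF vF uv; by rewrite addKn expnS expn1.
Qed.

Lemma Rbound_small (s q : nat) : (2 <= s)%N -> (q < s)%N -> (R s q <= 1)%N.
Proof.
move=> s2 qs; rewrite /R; apply/bigmax_leqP => F cov.
rewrite leqNgt; apply/negP => /card_gt1P [u [v [uF vF uv]]].
have : (#|[set: 'Z_s]| <= #|[set (u i - v i)%R | i : 'I_q]|)%N.
  apply: subset_leq_card; apply/subsetP => a _.
  have [i Hi] := @covP _ _ _ _ _ a cov uF vF uv.
  by apply/imsetP; exists i.
have -> : #|[set: 'Z_s]| = s by rewrite cardsT card_ord Zp_cast.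
move=> /leq_trans /(_ (leq_imset_card _ _)); rewrite card_ord.
by rewrite leqNgt qs.
Qed.

Theorem proposition4p2 (s q : nat) :
  (2 <= s)%N -> (1 <= q)%N ->
  2 * ((q%:Z - s%:Z) ^+ 2) < s%:Z - 1 ->
  (R s q)%:Z <= s%:Z + 2 * (q%:Z - s%:Z) + 2 * ((q%:Z - s%:Z) ^+ 2).
Proof.
move=> s2 q1; rewrite expr2 => hd.
have [qs|sq] := ltnP q s.
  have := @Rbound_small _ _ s2 qs => H.
  have H' : (R s q)%:Z <= 1 by rewrite lez_nat.
  have : (0 <= (q%:Z - s%:Z) * (q%:Z - s%:Z + 1)).
    have h1 : q%:Z - s%:Z + 1 <= 0 by lia.
    nia.
  nia.
have := subnKC sq; set d := (q - s)%N => qE.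
have hd' : (2 * d * d < s - 1)%N.
  move: hd; rewrite -qE PoszD; lia.
have := @Rbound_big _ _ s2 hd'; rewrite qE => H.
move: H; rewrite -lez_nat -qE !PoszD !PoszM; lia.
Qed.
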